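(* Let $n\ge1$ and $1\le k\le n$. Let $\equiv$ be the equivalence relation on $\mathfrak S_n$ generated by the relations $cab\equiv cba$ and $abc\equiv acb$ for letters $a<b<c$ in three consecutive positions. Among the $\equiv$-classes of $\mathfrak S_n$, exactly $\binom{n-1}{k-1}$ are classes of permutations beginning with the letter $k$.
   Context: Permutations of $\mathfrak S_n$ are words $\sigma_1\cdots\sigma_n$; a relation such as $cab\equiv cba$ allows replacing three adjacent letters forming the pattern $cab$ by the same letters arranged as $cba$, and conversely. *)

(* Defs.v *)
From Stdlib Require Import Relations.
From mathcomp Require Import all_boot all_fingroup.
From mathcomp Require Import boolp.
Set Implicit Arguments. Unset Strict Implicit. Unset Printing Implicit Defensive.

Definition word n (s : {perm 'I_n}) : seq nat :=
  [seq (s i).+1 | i <- enum 'I_n].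

Definition elem_move (w w' : seq nat) : Prop :=
  exists (u v : seq nat) (a b c : nat), a < b < c /\
    ((w = u ++ [:: c; a; b] ++ v /\ w' = u ++ [:: c; b; a] ++ v) \/
     (w = u ++ [:: a; b; c] ++ v /\ w' = u ++ [:: a; c; b] ++ v)).

Definition perm_equiv n (s t : {perm 'I_n}) : Prop :=
  clos_refl_sym_trans _ (fun x y => elem_move (word x) (word y)) s t.

Definition equiv_class n (s : {perm 'I_n}) : {set {perm 'I_n}} :=
  [set t | `[< perm_equiv s t >]].

Definition equiv_classes n : {set {set {perm 'I_n}}} :=
  [set equiv_class s | s : {perm 'I_n}].

(* Main.v *)
Require Import Defs.
From Stdlib Require Import Relations.
From mathcomp Require Import all_boot all_fingroup.
From mathcomp Require Import boolp.
From mathcomp Require Import zify.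
Set Implicit Arguments. Unset Strict Implicit. Unset Printing Implicit Defensive.

Definition W := clos_refl_sym_trans (seq nat) elem_move.

Definition out (e y z : nat) := ((e < y) && (e < z)) || ((y < e) && (z < e)).

Lemma W_refl w : W w w. Proof. exact: rst_refl. Qed.
Lemma W_sym a b : W a b -> W b a. Proof. exact: rst_sym. Qed.
Lemma W_trans a b c : W a b -> W b c -> W a c. Proof. exact: rst_trans. Qed.

Lemma move_out u x y z v : out x y z -> y != z ->
  W (u ++ x :: y :: z :: v) (u ++ x :: z :: y :: v).
Proof.
move=> /orP[/andP[xy xz]|/andP[yx zx]] yz.
- case: (ltngtP y z) => [lt|lt|eq]; last by rewrite eq eqxx in yz.
  + apply: rst_step; exists u, v, x, y, z; split; first by rewrite xy lt.
    by right.
  + apply: rst_sym; apply: rst_step; exists u, v, x, z, y; split; first by rewrite xz lt.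
    by right.
- case: (ltngtP y z) => [lt|lt|eq]; last by rewrite eq eqxx in yz.
  + apply: rst_step; exists u, v, y, z, x; split; first by rewrite lt zx.
    by left.
  + apply: rst_sym; apply: rst_step; exists u, v, z, y, x; split; first by rewrite lt yx.
    by left.
Qed.

Lemma W_catl a b s : W a b -> W (a ++ s) (b ++ s).
Proof.
elim=> [x y [u [v [p [q [r [H1 [[-> ->]|[-> ->]]]]]]]]|x|x y _ IH|x y z _ IH1 _ IH2].
- by apply: rst_step; exists u, (v ++ s), p, q, r; split=> //; left; rewrite -!catA.
- by apply: rst_step; exists u, (v ++ s), p, q, r; split=> //; right; rewrite -!catA.
- exact: rst_refl.
- exact: rst_sym.
- exact: rst_trans IH2.
Qed.

Lemma uniq_help (u : seq nat) x y z : uniq [:: y, z & rcons u x] ->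
  [/\ uniq [:: x, y & u], uniq [:: y, z & u] & uniq [:: z, x & u]].
Proof.
rewrite /= !inE !mem_rcons !inE rcons_uniq.
rewrite [y == x]eq_sym [z == x]eq_sym.
case: (x \in u); case: (y \in u); case: (z \in u); case: (x == y); case: (x == z); case: (y == z);
  rewrite //= ?andbF //.
Qed.

Lemma gmove n : forall u y z v e, size u <= n -> e \in u -> out e y z -> uniq [:: y, z & u] ->
  W (u ++ y :: z :: v) (u ++ z :: y :: v).
Proof.
elim: n => [|n IH] u y z v e.
  by case: u.
case/lastP: u => [//|u x] Hs eu oe Hu.
have [U1 U2 U3] := uniq_help Hu.
have yz : y != z by move: Hu => /=; rewrite inE; case/andP => /norP[].
rewrite -!cats1 -!catA /=.
case ox: (out x y z); first exact: move_out.
have ex : e \in u.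
  move: eu; rewrite mem_rcons inE => /orP[/eqP exE|//].
  by move: ox oe; rewrite exE => ->.
have Hs' : size u <= n by move: Hs; rewrite size_rcons.
have xy : x != y by move: U1 => /=; rewrite inE; case/andP => /norP[].
have xz : x != z by move: U3 => /=; rewrite inE; case/andP => /norP[]; rewrite eq_sym.
move: ox oe xy xz yz; rewrite /out => ox oe /eqP xy /eqP xz /eqP yz.
apply: W_trans (IH u x y (z :: v) e Hs' ex _ U1) _.
  rewrite /out; move: ox oe; lia.
apply: W_trans (move_out u v _ _) _.
  rewrite /out; move: ox; lia.
  by apply/eqP.
apply: W_trans (IH u y z (x :: v) e Hs' ex _ U2) _.
  by rewrite /out; move: oe; lia.
apply: W_trans (move_out u v _ _) _.
  rewrite /out; move: ox; lia.
  by apply/eqP; lia.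
apply: W_trans (IH u z x (y :: v) e Hs' ex _ U3) _.
  rewrite /out; move: ox oe; lia.
exact: W_refl.
Qed.

Lemma gmoveW u y z v e : e \in u -> out e y z -> uniq [:: y, z & u] ->
  W (u ++ y :: z :: v) (u ++ z :: y :: v).
Proof. exact: (@gmove (size u)). Qed.

Lemma bubble v : forall u e M, e \in u -> all (fun y => out e M y) v ->
  uniq (u ++ M :: v) ->
  W (u ++ M :: v) (u ++ v ++ [:: M]).
Proof.
elim: v => [|y v IH] u e M eu /=; first by move=> _ _; exact: W_refl.
case/andP=> o Hv Hu.
have P1 : perm_eq (u ++ [:: M; y] ++ v) ([:: M; y] ++ u ++ v) by apply/permPl/perm_catCA.
have P2 : perm_eq (u ++ [:: y; M] ++ v) ([:: y; M] ++ u ++ v) by apply/permPl/perm_catCA.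
apply: W_trans (gmoveW v eu o _) _.
  move: Hu; rewrite (perm_uniq P1) /= !inE mem_cat negb_or.
  move=> /and3P[/andP[a b] c d]; rewrite negb_or a /=.
  move: b c d; rewrite !mem_cat !negb_or cat_uniq => /andP[-> _] /andP[-> _] /andP[-> _] //.
have := IH (rcons u y) e M; rewrite -!cats1 -!catA /=; apply=> //.
  by rewrite mem_cat eu.
rewrite -[u ++ [:: y, M & v]]/(u ++ [:: y; M] ++ v) (perm_uniq P2).
move: Hu; rewrite -[u ++ [:: M, y & v]]/(u ++ [:: M; y] ++ v) (perm_uniq P1) /= !inE.
rewrite [y == M]eq_sym !negb_or; case: (M == y); case: (M \in u ++ v); case: (y \in u ++ v); by [].
Qed.

Fixpoint invf (d L H : nat) (w : seq nat) : seq bool :=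
  if d is d'.+1 then
    if index L w < index H w then true :: invf d' L H.-1 w else false :: invf d' L.+1 H w
  else [::].

Lemma before_in (u r : seq nat) a e : e \in u -> index a (u ++ r) <= index e (u ++ r) -> a \in u.
Proof.
move=> eu; rewrite !index_cat eu; case: ifP => // _.
have := index_mem e u; rewrite eu; lia.
Qed.

Lemma index_cons2 (a y z : nat) v :
  index a [:: y, z & v] = if a == y then 0 else if a == z then 1 else (index a v).+2.
Proof.
rewrite /= [y == a]eq_sym [z == a]eq_sym; by case: (a == y); case: (a == z).
Qed.

Lemma cmp_swap (u v : seq nat) (y z a b : nat) : uniq (u ++ y :: z :: v) -> y != z ->
  ~~ ((a == y) && (b == z)) -> ~~ ((a == z) && (b == y)) ->
  (index a (u ++ y :: z :: v) < index b (u ++ y :: z :: v)) =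
  (index a (u ++ z :: y :: v) < index b (u ++ z :: y :: v)).
Proof.
move=> Hu yz ab ba.
have yu : y \notin u by move: Hu; rewrite cat_uniq /= => /and3P[_ /norP[] //].
have zu : z \notin u by move: Hu; rewrite cat_uniq /= => /and3P[_ /norP[_ /norP[]] //].
rewrite !index_cat.
case au: (a \in u); case bu: (b \in u); rewrite // !index_cons2.
- by have := index_mem a u; rewrite au => h; do !case: ifP => _; lia.
- have := index_mem b u; rewrite bu => h.
  by do !case: ifP => _; lia.
- move: ab ba yz; case: (a =P y); case: (a =P z); case: (b =P y); case: (b =P z);
    case: (y =P z); move=> /= *; lia.
Qed.

Lemma swap_invf (u v : seq nat) (y z : nat) : uniq (u ++ y :: z :: v) -> y != z ->
  forall d L H, H - L = d -> (exists2 e, e \in u & (L <= e <= H) && out e y z) \/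
                ~~ ((L <= y <= H) && (L <= z <= H)) ->
  invf d L H (u ++ y :: z :: v) = invf d L H (u ++ z :: y :: v).
Proof.
move=> Hu yz.
have yu : y \notin u by move: Hu; rewrite cat_uniq /= => /and3P[_ /norP[] //].
have zu : z \notin u by move: Hu; rewrite cat_uniq /= => /and3P[_ /norP[_ /norP[]] //].
elim=> [//|d IH] L H HLd Hyp /=.
have C : (index L (u ++ y :: z :: v) < index H (u ++ y :: z :: v)) =
         (index L (u ++ z :: y :: v) < index H (u ++ z :: y :: v)).
  apply: cmp_swap => //.
  - apply/negP=> /andP[/eqP E1 /eqP E2]; subst L H.
    case: Hyp => [[e _ He]|He]; move: He HLd; rewrite /out; lia.
  - apply/negP=> /andP[/eqP E1 /eqP E2]; subst L H.
    case: Hyp => [[e _ He]|He]; move: He; rewrite /out; lia.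
rewrite -C; case: ifP => h; congr (_ :: _); (apply: IH; first by lia).
- case: (boolP ((L <= y <= H.-1) && (L <= z <= H.-1))) => R; last by right.
  left; case: Hyp => [[e eu He]|]; last by move: R; lia.
  case: (boolP (e <= H.-1)) => eH.
    by exists e => //; move: He eH; rewrite /out; lia.
  have eE : e = H by move: He eH; rewrite /out; lia.
  have Lu : L \in u by apply: (@before_in u (y :: z :: v) L e eu); rewrite eE; exact: ltnW.
  have Ly : L != y by apply/eqP => E; rewrite -E Lu in yu.
  have Lz : L != z by apply/eqP => E; rewrite -E Lu in zu.
  exists L => //; move: R Ly Lz => /andP[R1 R2] /eqP Ly /eqP Lz; rewrite /out.
  move: R1 R2; lia.
- case: (boolP ((L.+1 <= y <= H) && (L.+1 <= z <= H))) => R; last by right.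
  left; case: Hyp => [[e eu He]|]; last by move: R; lia.
  case: (boolP (L.+1 <= e)) => eH.
    by exists e => //; move: He eH; rewrite /out; lia.
  have eE : e = L by move: He eH; rewrite /out; lia.
  have Hu' : H \in u by apply: (@before_in u (y :: z :: v) H e eu); rewrite eE; move: h => /negbT; rewrite -leqNgt.
  have Hy : H != y by apply/eqP => E; rewrite -E Hu' in yu.
  have Hz : H != z by apply/eqP => E; rewrite -E Hu' in zu.
  exists H => //; move: R Hy Hz => /andP[R1 R2] /eqP Hy /eqP Hz; rewrite /out.
  move: R1 R2; lia.
Qed.

Lemma move_perm w w' : elem_move w w' -> perm_eq w w'.
Proof.
case=> [u [v [a [b [c [_ [[-> ->]|[-> ->]]]]]]]];
  rewrite perm_cat2l perm_cat2r perm_cons; apply/seq.permP => p /=; lia.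
Qed.

Lemma W_perm w w' : W w w' -> perm_eq w w'.
Proof.
elim=> [x y /move_perm //|x|x y _|x y z _ h1 _ h2]; first exact: perm_refl.
- by rewrite perm_sym.
- exact: perm_trans h2.
Qed.

Lemma move_invf w w' d L H : elem_move w w' -> uniq w -> all (fun x => L <= x <= H) w ->
  H - L = d -> invf d L H w = invf d L H w'.
Proof.
case=> [u [v [a [b [c [abc [[-> ->]|[-> ->]]]]]]]] Hu Hall HL.
- have := @swap_invf (rcons u c) v a b; rewrite -!cats1 -!catA /=; apply=> //.
  + by apply/eqP; lia.
  + left; exists c; first by rewrite mem_cat inE eqxx orbT.
    move: Hall; rewrite all_cat /= => /and3P[_ -> _] /=.
    by rewrite /out; lia.
- have := @swap_invf (rcons u a) v b c; rewrite -!cats1 -!catA /=; apply=> //.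
  + by apply/eqP; lia.
  + left; exists a; first by rewrite mem_cat inE eqxx orbT.
    move: Hall; rewrite all_cat /= => /and3P[_ -> _] /=.
    by rewrite /out; lia.
Qed.

Lemma W_invf w w' d L H : W w w' -> uniq w -> all (fun x => L <= x <= H) w ->
  H - L = d -> invf d L H w = invf d L H w'.
Proof.
move=> HW; elim: HW => [x y M|x|x y Hxy IH|x y z Hxy IH1 Hyz IH2] Hu Ha HL.
- exact: move_invf.
- by [].
- have P := W_perm Hxy.
  by rewrite IH // ?(perm_uniq P) ?(perm_all _ P).
- have P := W_perm Hxy.
  by rewrite IH1 // IH2 // -?(perm_uniq P) -?(perm_all _ P).
Qed.

Fixpoint build (L H : nat) (bs : seq bool) : seq nat :=
  if bs is b :: bs' then
    (if b then rcons (build L H.-1 bs') H else rcons (build L.+1 H bs') L)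
  else [:: L].

Lemma eq_invf d : forall L H (w w' : seq nat), H - L = d ->
  (forall x, L <= x <= H -> index x w = index x w') -> invf d L H w = invf d L H w'.
Proof.
elim: d => [//|d IH] L H w w' HL E /=.
rewrite !E; try (apply/andP; lia).
case: ifP => _; congr (_ :: _); apply: IH; try lia.
- by move=> x hx; apply: E; lia.
- by move=> x hx; apply: E; lia.
Qed.

Lemma perm_del (u v s : seq nat) x : perm_eq (u ++ x :: v) (x :: s) -> perm_eq (u ++ v) s.
Proof.
move=> P; rewrite -(perm_cons x); apply: perm_trans P.
have := perm_catCA u [:: x] v => /permPl; by rewrite perm_sym.
Qed.

Lemma iota_last L d : iota L d.+1 = rcons (iota L d) (L + d).
Proof. by rewrite -cats1 -addn1 iotaD. Qed.

Lemma mem_range L d x : perm_eq (iota L d) x -> forall y, y \in x -> L <= y < L + d.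
Proof. by move=> P y; rewrite -(perm_mem P) mem_iota. Qed.

Lemma canon_form d : forall L H w, H - L = d -> perm_eq w (iota L d.+1) ->
  W w (build L H (invf d L H w)).
Proof.
elim: d => [|d IH] L H w HL P.
  have := perm_size P; case: w P => [|a [|b w]] //= P _.
  have : a \in [:: L] by rewrite -(perm_mem P) inE eqxx.
  rewrite inE => /eqP ->; exact: W_refl.
have Hu : uniq w by rewrite (perm_uniq P) iota_uniq.
have Hr : all (fun y => L <= y <= H) w.
  by apply/allP => y yw; move: P; rewrite perm_sym => /mem_range => /(_ y yw); lia.
have Lw : L \in w by rewrite (perm_mem P) mem_iota; lia.
have Hw : H \in w by rewrite (perm_mem P) mem_iota; lia.
have PH : perm_eq w (H :: iota L d.+1).
  apply: perm_trans P _; rewrite iota_last; have -> : L + d.+1 = H by lia.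
  by rewrite perm_rcons.
have PL : perm_eq w (L :: iota L.+1 d.+1) by [].
rewrite /=; case: ifP => h.
- move: P Hu Hr h Lw PH; case/splitPr: Hw => u v P Hu Hr h Lw PH.
  have Hnu : H \notin u by move: Hu; rewrite cat_uniq /= => /and3P[_ /norP[] ].
  have Lu : L \in u.
    move: h; rewrite !index_cat (negbTE Hnu) /= eqxx addn0; case: ifP => // _; lia.
  have Bub : W (u ++ H :: v) (u ++ v ++ [:: H]).
    apply: (bubble Lu) => //; apply/allP => y yv.
    have yL : y != L.
      apply/eqP => E; move: Hu; rewrite cat_uniq => /and3P[_ /hasPn /(_ y)] .
      by rewrite inE yv orbT E Lu => /(_ isT).
    move: Hr => /allP /(_ y); rewrite mem_cat inE yv !orbT => /(_ isT).
    move: yL => /eqP; rewrite /out; lia.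
  have P1 : perm_eq (u ++ v) (iota L d.+1) by apply: perm_del PH.
  have E := W_invf Bub Hu Hr HL.
  have Hnuv : H \notin u ++ v by rewrite (perm_mem P1) mem_iota; lia.
  have hlt : index L ((u ++ v) ++ [:: H]) < index H ((u ++ v) ++ [:: H]).
    have Luv : L \in u ++ v by rewrite mem_cat Lu.
    rewrite [index H _]index_cat (negbTE Hnuv) /= eqxx addn0 [index L _]index_cat Luv.
    by rewrite index_mem.
  move: E => /=; rewrite h catA hlt => -[->].
  rewrite (@eq_invf d L H.-1 ((u ++ v) ++ [:: H]) (u ++ v)); first last.
  + move=> x hx; rewrite index_cat.
    have -> : x \in u ++ v by rewrite (perm_mem P1) mem_iota; lia.
    by [].
  + lia.
  apply: W_trans Bub _; rewrite -cats1 catA; apply: W_catl; apply: IH => //; lia.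
- move: P Hu Hr h Hw PL; case/splitPr: Lw => u v P Hu Hr h Hw PL.
  have Lnu : L \notin u by move: Hu; rewrite cat_uniq /= => /and3P[_ /norP[] ].
  have LH : (L == H) = false by apply/eqP; lia.
  have Hu' : H \in u.
    move: h; rewrite !index_cat (negbTE Lnu) /= eqxx addn0 LH; case: ifP => // _; lia.
  have Bub : W (u ++ L :: v) (u ++ v ++ [:: L]).
    apply: (bubble Hu') => //; apply/allP => y yv.
    have yH : y != H.
      apply/eqP => E; move: Hu; rewrite cat_uniq => /and3P[_ /hasPn /(_ y)] .
      by rewrite inE yv orbT E Hu' => /(_ isT).
    move: Hr => /allP /(_ y); rewrite mem_cat inE yv !orbT => /(_ isT).
    move: yH => /eqP; rewrite /out; lia.
  have P1 : perm_eq (u ++ v) (iota L.+1 d.+1) by apply: perm_del PL.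
  have E := W_invf Bub Hu Hr HL.
  have Lnuv : L \notin u ++ v by rewrite (perm_mem P1) mem_iota; lia.
  have hlt : (index L ((u ++ v) ++ [:: L]) < index H ((u ++ v) ++ [:: L])) = false.
    have Huv : H \in u ++ v by rewrite mem_cat Hu'.
    rewrite [index L _]index_cat (negbTE Lnuv) /= eqxx addn0 [index H _]index_cat Huv.
    by apply/negbTE; rewrite -leqNgt; apply: ltnW; rewrite index_mem.
  move: E => /=; rewrite h catA hlt => -[->].
  rewrite (@eq_invf d L.+1 H ((u ++ v) ++ [:: L]) (u ++ v)); first last.
  + move=> x hx; rewrite index_cat.
    have -> : x \in u ++ v by rewrite (perm_mem P1) mem_iota; lia.
    by [].
  + lia.
  apply: W_trans Bub _; rewrite -cats1 catA; apply: W_catl; apply: IH => //; lia.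
Qed.

Lemma build_perm bs : forall L H, H - L = size bs ->
  perm_eq (build L H bs) (iota L (size bs).+1).
Proof.
elim: bs => [|b bs IH] L H HL; first by [].
rewrite /= in HL; case: b.
- rewrite [size _]/= iota_last; have -> : L + (size bs).+1 = H by lia.
  rewrite /= -!cats1 -cat_cons perm_cat2r; apply: IH; lia.
- rewrite /= perm_rcons /= perm_cons; apply: IH; lia.
Qed.

Lemma index_rcons_in (r : seq nat) x y : x \in r -> index x (rcons r y) = index x r.
Proof. by move=> xr; rewrite -cats1 index_cat xr. Qed.

Lemma index_rcons_out (r : seq nat) y : y \notin r -> index y (rcons r y) = size r.
Proof. by move=> yr; rewrite -cats1 index_cat (negbTE yr) /= eqxx addn0. Qed.

Lemma invf_build bs : forall L H, H - L = size bs -> invf (size bs) L H (build L H bs) = bs.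
Proof.
elim: bs => [|b bs IH] L H /= HL; first by [].
case: b.
- have P := @build_perm bs L H.-1 ltac:(lia).
  have Lr : L \in build L H.-1 bs by rewrite (perm_mem P) mem_iota; lia.
  have Hr : H \notin build L H.-1 bs by rewrite (perm_mem P) mem_iota; lia.
  rewrite (index_rcons_in _ Lr) (index_rcons_out Hr) index_mem Lr.
  congr (_ :: _).
  have E : H.-1 - L = size bs by lia.
  rewrite -[RHS](IH L H.-1 E).
  apply: eq_invf => // x hx; apply: index_rcons_in; rewrite (perm_mem P) mem_iota; lia.
- have P := @build_perm bs L.+1 H ltac:(lia).
  have Lr : L \notin build L.+1 H bs by rewrite (perm_mem P) mem_iota; lia.
  have Hr : H \in build L.+1 H bs by rewrite (perm_mem P) mem_iota; lia.
  rewrite (index_rcons_out Lr) (index_rcons_in _ Hr).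
  have -> : (size (build L.+1 H bs) < index H (build L.+1 H bs)) = false.
    by apply/negbTE; rewrite -leqNgt; apply: ltnW; rewrite index_mem.
  congr (_ :: _).
  have E : H - L.+1 = size bs by lia.
  rewrite -[RHS](IH L.+1 H E).
  apply: eq_invf => // x hx; apply: index_rcons_in; rewrite (perm_mem P) mem_iota; lia.
Qed.

Lemma head_build bs : forall L H, H - L = size bs ->
  head 0 (build L H bs) = L + count negb bs.
Proof.
elim: bs => [|b bs IH] L H /= HL; first by rewrite addn0.
have hr : forall (r : seq nat) x, 0 < size r -> head 0 (rcons r x) = head 0 r.
  by move=> [|? ?].
case: b => /=.
- rewrite hr; first by rewrite IH //; lia.
  by rewrite (perm_size (@build_perm bs L H.-1 ltac:(lia))).
- rewrite hr; first by rewrite IH //; lia.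
  by rewrite (perm_size (@build_perm bs L.+1 H ltac:(lia))).
Qed.

Lemma size_invf d : forall L H (w : seq nat), size (invf d L H w) = d.
Proof. by elim: d => [//|d IH] L H w /=; case: ifP => _ /=; rewrite IH. Qed.

Lemma count_invf d : forall L H (w : seq nat) h, H - L = d ->
  (forall x, L <= x <= H -> x \in w) -> head 0 w = h -> L <= h <= H ->
  count negb (invf d L H w) = h - L.
Proof.
elim: d => [|d IH] L H w h HL Hin hh hr /=; first lia.
have ih0 : index h w = 0 by case: w Hin hh => [|a w] Hin //= <-; rewrite eqxx.
have Lw : L \in w by apply: Hin; lia.
have Hw : H \in w by apply: Hin; lia.
case: ifP => hlt /=.
- have hH : h != H by apply/eqP => E; move: hlt; rewrite -E ih0.
  have Hin' : forall x, L <= x <= H.-1 -> x \in w by move=> x hx; apply: Hin; lia.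
  have hr' : L <= h <= H.-1 by move: hH => /eqP; lia.
  rewrite (IH L H.-1 w h _ Hin' hh hr'); lia.
- have hL : h != L.
    apply/eqP => E; move: hlt; rewrite -E ih0.
    case E2: (index H w) => [|//] _.
    have : nth 0 w (index H w) = nth 0 w (index h w) by rewrite E2 ih0.
    rewrite !nth_index //; first by lia.
    by rewrite E.
  have Hin' : forall x, L.+1 <= x <= H -> x \in w by move=> x hx; apply: Hin; lia.
  have hr' : L.+1 <= h <= H by move: hL => /eqP; lia.
  rewrite (IH L.+1 H w h _ Hin' hh hr'); lia.
Qed.

Lemma word_perm n (s : {perm 'I_n}) : perm_eq (word s) (iota 1 n).
Proof.
apply: uniq_perm.
- rewrite map_inj_uniq ?enum_uniq // => i j /eqP; rewrite eqSS => /eqP /val_inj; exact: perm_inj.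
- exact: iota_uniq.
move=> x; rewrite mem_iota; apply/mapP/idP.
  by case=> i _ ->; have := ltn_ord (s i); lia.
move=> hx; have hx' : x.-1 < n by lia.
exists ((s^-1)%g (Ordinal hx')); first by rewrite mem_enum.
by rewrite permKV /=; lia.
Qed.

Lemma word_of n (w : seq nat) : perm_eq w (iota 1 n) -> exists t : {perm 'I_n}, w = word t.
Proof.
move=> P.
have Hu : uniq w by rewrite (perm_uniq P) iota_uniq.
have Hs : size w = n by rewrite (perm_size P) size_iota.
have Hr : forall i : 'I_n, 0 < nth 0 w i <= n.
  move=> i; have : nth 0 w i \in w by rewrite mem_nth // Hs.
  by rewrite (perm_mem P) mem_iota; lia.
pose f := fun i : 'I_n => (insubd i (nth 0 w i).-1 : 'I_n).
have fK : forall i, (f i : nat) = (nth 0 w i).-1.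
  by move=> i; rewrite /f insubdK //; have := Hr i; lia.
have finj : injective f.
  move=> i j /(congr1 val) E.
  have E' : (nth 0 w i).-1 = (nth 0 w j).-1 by rewrite -!fK.
  apply/val_inj => /=; apply/eqP; rewrite -(nth_uniq 0 _ _ Hu) ?Hs //.
  apply/eqP; have := Hr i; have := Hr j; move: E'.
  by case: (nth 0 w i) => [|a]; case: (nth 0 w j) => [|b] //= ->.
exists (perm finj).
rewrite /word -[LHS](mkseq_nth 0 w) Hs /mkseq -val_enum_ord -map_comp.
apply: eq_map => i /=; rewrite permE fK; have := Hr i; lia.
Qed.

Lemma word_inj n (s t : {perm 'I_n}) : word s = word t -> s = t.
Proof.
move=> /eq_in_map E; apply/permP => i.
have := E i; rewrite mem_enum => /(_ isT) [] /val_inj //.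
Qed.

Lemma perm_equiv_W n (s t : {perm 'I_n}) : perm_equiv s t -> W (word s) (word t).
Proof.
elim=> [x y h|x|x y _ IH|x y z _ IH1 _ IH2].
- exact: rst_step.
- exact: rst_refl.
- exact: rst_sym.
- exact: rst_trans IH2.
Qed.

Lemma W_perm_equiv n (x y : seq nat) : W x y ->
  forall s t : {perm 'I_n}, x = word s -> y = word t -> perm_equiv s t.
Proof.
elim=> [x' y' h|x'|x' y' _ IH|x' y' z' Hxy IH1 _ IH2] s t Ex Ey.
- by apply: rst_step; rewrite -Ex -Ey.
- by rewrite (word_inj (etrans (esym Ex) Ey)); exact: rst_refl.
- by apply: rst_sym; apply: IH.
- have [u Eu] : exists u : {perm 'I_n}, y' = word u.
    apply: word_of; apply: perm_trans (word_perm s).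
    by rewrite -Ex perm_sym; apply: W_perm.
  apply: rst_trans (IH1 s u Ex Eu) (IH2 u t Eu Ey).
Qed.

Lemma move_head w w' : elem_move w w' -> head 0 w = head 0 w'.
Proof. by case=> [u [v [a [b [c [_ [[-> ->]|[-> ->]]]]]]]]; case: u. Qed.

Lemma W_head w w' : W w w' -> head 0 w = head 0 w'.
Proof.
elim=> [x y /move_head //|x //|x y _ IH //|x y z _ IH1 _ IH2]; by rewrite IH1.
Qed.

Definition Fw n (s : {perm 'I_n}) := invf (n - 1) 1 n (word s).

Lemma word_range n (s : {perm 'I_n}) : all (fun x => 1 <= x <= n) (word s).
Proof.
by apply/allP => x; rewrite (perm_mem (word_perm s)) mem_iota; lia.
Qed.

Lemma word_perm' n (s : {perm 'I_n}) : 1 <= n -> perm_eq (word s) (iota 1 (n - 1).+1).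
Proof. move=> hn; have -> : (n - 1).+1 = n by lia. exact: word_perm. Qed.

Lemma F_equiv n (s t : {perm 'I_n}) : 1 <= n -> perm_equiv s t <-> Fw s = Fw t.
Proof.
move=> hn; split.
- move=> /perm_equiv_W HW; rewrite /Fw; apply: W_invf => //.
  + by rewrite (perm_uniq (word_perm s)) iota_uniq.
  + exact: word_range.
- move=> E; apply: (W_perm_equiv (x := word s) (y := word t)) => //.
  have h1 := @canon_form (n - 1) 1 n (word s) (erefl _) (word_perm' s hn).
  have h2 := @canon_form (n - 1) 1 n (word t) (erefl _) (word_perm' t hn).
  rewrite -/(Fw s) -/(Fw t) E in h1 h2.
  exact: (W_trans h1 (W_sym h2)).
Qed.

Lemma class_eq n (s t : {perm 'I_n}) : Defs.equiv_class s = Defs.equiv_class t <-> perm_equiv s t.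
Proof.
split.
- move=> E; have : t \in Defs.equiv_class t by rewrite inE; apply/asboolP; exact: rst_refl.
  by rewrite -E inE => /asboolP.
- move=> H; apply/setP => u; rewrite !inE; apply/asboolP/asboolP => Hu.
  + by eapply rst_trans; [apply: rst_sym; exact: H | exact: Hu].
  + by eapply rst_trans; [exact: H | exact: Hu].
Qed.

Lemma card_imset_eqv (T U V : finType) (f : T -> U) (g : T -> V) (A : {set T}) (x0 : T) :
  {in A &, forall x y, (f x == f y) = (g x == g y)} -> #|f @: A| = #|g @: A|.
Proof.
move=> Heq.
pose h := fun u => g (odflt x0 [pick x in A | f x == u]).
have hf : {in A, forall x, h (f x) = g x}.
  move=> x xA; rewrite /h; case: pickP => [y /andP[yA /eqP fy]|none] /=.
    by apply/eqP; rewrite -Heq // fy.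
  by have := none x; rewrite xA eqxx.
have -> : g @: A = h @: (f @: A).
  rewrite -imset_comp; apply: eq_in_imset => x xA /=; by rewrite hf.
apply/esym/card_in_imset => u v /imsetP[x xA ->] /imsetP[y yA ->].
rewrite !hf // => /eqP; rewrite -Heq // => /eqP //.
Qed.

Lemma card_nth (bs : seq bool) m : size bs = m ->
  #|[set i : 'I_m | ~~ nth true bs i]| = count negb bs.
Proof.
move=> Hs.
rewrite -sum1_card (eq_bigl (fun i : 'I_m => ~~ nth true bs i)); last by move=> i; rewrite inE.
rewrite -(big_mkord (fun i => ~~ nth true bs i) (fun _ => 1)) sum1_count /index_iota subn0.
by rewrite -[in RHS](mkseq_nth true bs) Hs /mkseq count_map.
Qed.

Unset Implicit Arguments.

Theorem mainTheorem10 (n k : nat) (hn : 1 <= n) (hk1 : 1 <= k) (hkn : k <= n) :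
  #|[set C in equiv_classes n | [forall t in C, head 0 (word t) == k]]|
  = 'C(n - 1, k - 1).
Proof.
pose K := [set s : {perm 'I_n} | head 0 (word s) == k].
pose G := fun s : {perm 'I_n} => [set i : 'I_(n - 1) | ~~ nth true (Fw s) i].
have hW : forall s t : {perm 'I_n}, perm_equiv s t -> head 0 (word s) = head 0 (word t).
  by move=> s t /perm_equiv_W /W_head.
have E1 : [set C in equiv_classes n | [forall t in C, head 0 (word t) == k]] = (@Defs.equiv_class n) @: K.
  apply/setP => C; rewrite inE; apply/andP/imsetP.
  - case=> /imsetP[s _ ->] /forallP /(_ s); rewrite inE => H.
    exists s => //; rewrite inE; apply: (implyP H); apply/asboolP; exact: rst_refl.
  - case=> s; rewrite inE => /eqP hs ->; split; first by apply: imset_f.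
    apply/forallP => t; apply/implyP; rewrite inE => /asboolP /hW <-; exact/eqP.
have GF : forall s t, (G s == G t) = (Fw s == Fw t).
  move=> s t; apply/eqP/eqP => E; last by rewrite /G E.
  apply: (@eq_from_nth _ true); first by rewrite !size_invf.
  move=> i; rewrite size_invf => hi.
  have : (Ordinal hi \in G s) = (Ordinal hi \in G t) by rewrite E.
  by rewrite !inE /= => /negb_inj.
have E2 : #|(@Defs.equiv_class n) @: K| = #|G @: K|.
  apply: (@card_imset_eqv _ _ _ _ _ K 1%g) => s t _ _.
  rewrite GF; apply/eqP/eqP => E.
  - by apply/(F_equiv s t hn)/class_eq.
  - by apply/class_eq/(F_equiv s t hn).
have E3 : G @: K = [set A : {set 'I_(n - 1)} | #|A| == k - 1].
  apply/setP => A; rewrite inE; apply/imsetP/eqP.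
  - case=> s; rewrite inE => /eqP hs ->.
    rewrite card_nth ?size_invf //.
    rewrite /Fw (@count_invf (n - 1) 1 n (word s) k) //.
    + move=> x hx; rewrite (perm_mem (word_perm s)) mem_iota; lia.
    + lia.
  - move=> hA.
    pose bs := [seq i \notin A | i <- enum 'I_(n - 1)].
    have sbs : size bs = n - 1 by rewrite size_map size_enum_ord.
    have SA : [set i : 'I_(n - 1) | ~~ nth true bs i] = A.
      apply/setP => i; rewrite inE /bs (nth_map i) ?size_enum_ord // nth_ord_enum.
      by rewrite negbK.
    have cbs : count negb bs = k - 1 by rewrite -(card_nth sbs) SA hA.
    have Pw : perm_eq (build 1 n bs) (iota 1 n).
      have := @build_perm bs 1 n ltac:(lia); rewrite sbs.
      by have -> : (n - 1).+1 = n by lia.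
    have [t Et] := word_of Pw.
    exists t.
      rewrite inE -Et head_build; last by lia.
      by rewrite cbs; apply/eqP; lia.
    have Ft : Fw t = bs by rewrite /Fw -Et -sbs invf_build //; lia.
    by rewrite /G Ft SA.
rewrite E1 E2 E3 card_draws card_ord //.
Qed.
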